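(* The MPB rule $M$ satisfies: (a) splitting monotonicity: for every instance $I$ and every $p\in W_M(I)$, if $I'$ is obtained from $I$ by replacing $p$ with a set $P'$ of new projects with $c(P')=c(p)$ and replacing every $A_i$ containing $p$ by $(A_i\setminus\{p\})\cup P'$, then $W_M(I')\cap P'\ne\emptyset$; (b) merging monotonicity: for every instance $I$, every $S\in M(I)$ and every $P'\subseteq S$ with $A_i\cap P'\in\{P',\emptyset\}$ for every voter $i$, if $I'$ is obtained from $I$ by merging the projects of $P'$ into a single new project $p$ with cost $c(P')$ and replacing every $A_i$ containing $P'$ by $(A_i\setminus P')\cup\{p\}$, then $p\in W_M(I')$; (c) weak exhaustiveness: for every instance $I$, every $S\in M(I)$ and every $p\in P\setminus S$ with $c(S)+c(p)\le b$, we have $S\cup\{p\}\in M(I)$.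
   Context: A PB instance is $I=\langle N,P,c,b,\mathcal{A}\rangle$ with voters $N=\{1,\dots,n\}$, projects $P$, costs $c:P\to\mathbb{N}$, budget $b\in\mathbb{N}$, and approval sets $A_i\subseteq P$. $c(S)=\sum_{p\in S}c(p)$; $S$ is feasible if $c(S)\le b$; $u_i(S)=c(S\cap A_i)$. A PB rule $R$ maps each instance to a set $R(I)$ of feasible subsets of $P$. The MPB rule $M$ outputs $M(I)$, the set of all feasible $S$ maximizing $\min_{i\in N}u_i(S)$ among feasible sets. For a rule $R$, $W_R(I)=\{p\in P:\exists S\in R(I),\ p\in S\}$ is the set of winning projects. *)

(* Defs.v *)
From mathcomp Require Import all_boot.
Set Implicit Arguments. Unset Strict Implicit. Unset Printing Implicit Defensive.

(* A PB instance with voters 'I_n (N = {1..n}) and project set = the whole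
   finite type P. *)
Record instance (n : nat) (P : finType) := Instance {
  cost : P -> nat;
  budget : nat;
  appr : 'I_n -> {set P} }.

Section PB.
Variables (n : nat) (P : finType) (I : instance n P).

Definition cost_set (S : {set P}) : nat := \sum_(x in S) cost I x.

Definition feasible (S : {set P}) : Prop := cost_set S <= budget I.

Definition util (i : 'I_n) (S : {set P}) : nat := cost_set (S :&: appr I i).

(* min_i u_i(S) >= min_i u_i(T), unfolded so that it is meaningful also for
   n = 0 (empty minimum = +infinity, all sets tie). *)
Definition min_util_ge (S T : {set P}) : Prop :=
  forall k, (forall i, k <= util i T) -> (forall i, k <= util i S).

Definition mpb (S : {set P}) : Prop :=
  feasible S /\ forall T, feasible T -> min_util_ge S T.

Definition winning (p : P) : Prop := exists S, mpb S /\ p \in S.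
End PB.

(* J (projects Q) is obtained from I (projects P) by splitting p into the
   set P' of new projects: emb identifies P \ {p} with Q \ P'. *)
Definition is_split (n : nat) (P Q : finType) (I : instance n P) (p : P)
    (J : instance n Q) (emb : P -> Q) (P' : {set Q}) : Prop :=
  (forall x y, x != p -> y != p -> emb x = emb y -> x = y) /\
      (forall x, x != p -> emb x \notin P') /\
      (forall q, q \notin P' -> exists x, x != p /\ emb x = q) /\
      (forall x, x != p -> cost J (emb x) = cost I x) /\
      cost_set J P' = cost I p /\
      budget J = budget I /\
      (forall i, appr J i =
         emb @: (appr I i :\ p) :|: (if p \in appr I i then P' else set0)).

(* J (projects Q) is obtained from I (projects P) by merging P' into the
   single new project p: emb identifies P \ P' with Q \ {p}. *)
Definition is_merge (n : nat) (P Q : finType) (I : instance n P) (P' : {set P})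
    (J : instance n Q) (emb : P -> Q) (p : Q) : Prop :=
  (forall x y, x \notin P' -> y \notin P' -> emb x = emb y -> x = y) /\
      (forall x, x \notin P' -> emb x != p) /\
      (forall q, q != p -> exists x, x \notin P' /\ emb x = q) /\
      (forall x, x \notin P' -> cost J (emb x) = cost I x) /\
      cost J p = cost_set I P' /\
      budget J = budget I /\
      (forall i, appr J i =
         emb @: (appr I i :\: P') :|: (if P' \subset appr I i then [set p] else set0)).

(* Main.v *)
Require Import Defs.
From mathcomp Require Import all_boot.
Set Implicit Arguments. Unset Strict Implicit. Unset Printing Implicit Defensive.

Section Gen.
Variables (n : nat) (P : finType) (I : instance n P).

Lemma costID (X D : {set P}) :
  cost_set I X = cost_set I (X :&: D) + cost_set I (X :\: D).
Proof. by rewrite /cost_set (big_setID D). Qed.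

Lemma cost_sub (X Y : {set P}) : X \subset Y -> cost_set I X <= cost_set I Y.
Proof.
move=> sXY; rewrite (costID Y X) (setIidPr sXY); exact: leq_addr.
Qed.

Lemma cost0 : cost_set I set0 = 0.
Proof. by rewrite /cost_set big_set0. Qed.

Lemma costU (A B : {set P}) : [disjoint A & B] ->
  cost_set I (A :|: B) = cost_set I A + cost_set I B.
Proof.
move=> dAB; rewrite /cost_set -bigU //; apply: eq_bigl => x; by rewrite !inE.
Qed.

Lemma min_util_ge_trans (S T U : {set P}) :
  min_util_ge I S T -> min_util_ge I T U -> min_util_ge I S U.
Proof. by move=> h1 h2 k hk; apply: h1; apply: h2. Qed.

Definition mu (T : {set P}) := \big[minn/cost_set I T]_i util I i T.

Lemma bigmin_le (J : eqType) (s : seq J) x (F : J -> nat) i :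
  i \in s -> \big[minn/x]_(j <- s) F j <= F i.
Proof.
elim: s => //= a s IH; rewrite inE big_cons => /orP[/eqP->|h].
  exact: geq_minl.
exact: leq_trans (geq_minr _ _) (IH h).
Qed.

Lemma mu_le_util T i : mu T <= util I i T.
Proof. rewrite /mu; apply: bigmin_le; by rewrite mem_index_enum. Qed.

Lemma util_le_cost T i : util I i T <= cost_set I T.
Proof. by apply: cost_sub; apply: subsetIl. Qed.

Lemma le_mu T k (i0 : 'I_n) : (forall i, k <= util I i T) -> k <= mu T.
Proof.
move=> h; rewrite /mu; elim/big_rec: _ => [|i y _ IH].
  exact: leq_trans (h i0) (util_le_cost _ _).
by rewrite leq_min h IH.
Qed.

Lemma mu_ge S T : mu T <= mu S -> min_util_ge I S T.
Proof.
move=> h k hk i; apply: leq_trans (mu_le_util _ i).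
exact: leq_trans (le_mu i hk) h.
Qed.

Lemma exists_opt : exists S, mpb I S.
Proof.
have P0 : cost_set I set0 <= budget I by rewrite cost0.
case: (@arg_maxnP _ set0 (fun T => cost_set I T <= budget I) mu P0) => S fS HS; exists S; split => // T fT.
exact/mu_ge/HS.
Qed.
End Gen.

Section Split.
Variables (n : nat) (P Q : finType) (I : instance n P) (p : P)
  (J : instance n Q) (emb : P -> Q) (P' : {set Q}).
Hypothesis H : is_split I p J emb P'.

Definition pre (Y : {set Q}) := [set x | (x != p) && (emb x \in Y)].

Lemma inj_emb x y : x != p -> y != p -> emb x = emb y -> x = y.
Proof. by move: H => [h1 [h2 [h3 [h4 [h5 [h6 h7]]]]]]; apply: h1. Qed.
Lemma notin_emb x : x != p -> emb x \notin P'.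
Proof. by move: H => [h1 [h2 [h3 [h4 [h5 [h6 h7]]]]]]; apply: h2. Qed.
Lemma surj_emb q : q \notin P' -> exists x, x != p /\ emb x = q.
Proof. by move: H => [h1 [h2 [h3 [h4 [h5 [h6 h7]]]]]]; apply: h3. Qed.
Lemma cost_emb x : x != p -> cost J (emb x) = cost I x.
Proof. by move: H => [h1 [h2 [h3 [h4 [h5 [h6 h7]]]]]]; apply: h4. Qed.
Lemma costP' : cost_set J P' = cost I p.
Proof. by move: H => [h1 [h2 [h3 [h4 [h5 [h6 h7]]]]]]; apply: h5. Qed.
Lemma bud : budget J = budget I.
Proof. by move: H => [h1 [h2 [h3 [h4 [h5 [h6 h7]]]]]]; apply: h6. Qed.
Lemma apprJ i : appr J i =
  emb @: (appr I i :\ p) :|: (if p \in appr I i then P' else set0).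
Proof. by move: H => [h1 [h2 [h3 [h4 [h5 [h6 h7]]]]]]; apply: h7. Qed.

Lemma decomp Y : cost_set J Y = cost_set I (pre Y) + cost_set J (Y :&: P').
Proof.
rewrite (costID J Y P') addnC; congr (_ + _).
have -> : Y :\: P' = emb @: pre Y.
  apply/setP => y; rewrite !inE; apply/andP/imsetP.
    move=> [yP yY]; case: (surj_emb yP) => x [xp ey].
    by exists x; rewrite ?inE ?xp ?ey ?yY.
  move=> [x]; rewrite inE => /andP[xp xY] ->; split=> //; exact: notin_emb.
rewrite /cost_set big_imset.
  by apply: eq_bigr => x; rewrite inE => /andP[xp _]; rewrite cost_emb.
move=> x y; rewrite !inE => /andP[xp _] /andP[yp _]; exact: inj_emb.
Qed.

Lemma preI Y Z : pre (Y :&: Z) = pre Y :&: pre Z.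
Proof. by apply/setP => x; rewrite !inE; case: (x != p). Qed.

Lemma preE (X : {set P}) (C : {set Q}) : p \notin X -> C \subset P' -> pre (emb @: X :|: C) = X.
Proof.
move=> pX CP; apply/setP => x; rewrite !inE.
case: (boolP (x == p)) => [/eqP-> | xp] /=; first by rewrite (negbTE pX).
have -> : (emb x \in C) = false.
  by apply/negP => /(subsetP CP); apply/negP; exact: notin_emb.
rewrite orbF; apply/imsetP/idP => [[y yX /inj_emb e]|]; last by exists x.
rewrite e //; apply/negP => /eqP yp; subst y; by rewrite yX in pX.
Qed.

Lemma capE (X : {set P}) (C : {set Q}) : p \notin X -> C \subset P' -> (emb @: X :|: C) :&: P' = C.
Proof.
move=> pX CP; apply/setP => y; rewrite !inE.
case: (boolP (y \in C)) => [yC|_]; first by rewrite orbT (subsetP CP).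
rewrite orbF andbC; apply/negP => /andP[yP /imsetP[x xX ey]].
have xp : x != p by apply/negP => /eqP xp; subst x; rewrite xX in pX.
by move: (notin_emb xp); rewrite -ey yP.
Qed.

Lemma utilJ i Y : util J i Y = cost_set I (pre Y :&: (appr I i :\ p)) +
  cost_set J (Y :&: (if p \in appr I i then P' else set0)).
Proof.
have hp : p \notin appr I i :\ p by rewrite !inE eqxx.
have hC : (if p \in appr I i then P' else set0) \subset P'.
  by case: ifP => _; rewrite ?sub0set.
by rewrite /util decomp preI apprJ preE // -setIA capE.
Qed.

Lemma split_ok : winning I p -> P' != set0 -> exists q, q \in P' /\ winning J q.
Proof.
case=> S [[fS optS] pS] nP'.
set S' := emb @: (S :\ p) :|: P'.
have hpS : p \notin S :\ p by rewrite !inE eqxx.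
have preS : pre S' = S :\ p := preE hpS (subxx _).
have capS : S' :&: P' = P' := capE hpS (subxx _).
have cS : cost_set I S = cost I p + cost_set I (S :\ p).
  rewrite (costID I S [set p]); congr (_ + _).
  have -> : S :&: [set p] = [set p] by apply/setIidPr; rewrite sub1set.
  by rewrite /cost_set big_set1.
have uS i : util J i S' = util I i S.
  rewrite utilJ preS /util (costID I (S :&: appr I i) [set p]) addnC.
  have -> : (S :\ p) :&: (appr I i :\ p) = (S :&: appr I i) :\: [set p].
    by apply/setP=> x; rewrite !inE; case: (x == p).
  congr (_ + _); case: ifP => pA.
    rewrite capS costP'.
    have -> : S :&: appr I i :&: [set p] = [set p] by apply/setIidPr; rewrite sub1set !inE pS pA.
    by rewrite /cost_set big_set1.
  rewrite setI0 cost0; apply/eqP; rewrite eq_sym; apply/eqP.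
  have -> : S :&: appr I i :&: [set p] = set0.
    apply/setP=> x; rewrite !inE; case: eqP => [->|]; rewrite ?pA ?andbF //.
  exact: cost0.
have fS' : feasible J S'.
  rewrite /feasible decomp preS capS costP' bud addnC -cS; exact: fS.
case: (exists_opt J) => T [fT optT].
case: (set_0Vmem (T :&: P')) => [TP0 | [q]]; last first.
  by rewrite inE => /andP[qT qP]; exists q; split => //; exists T.
have fpT : feasible I (pre T).
  move: fT; rewrite /feasible decomp TP0 cost0 addn0 bud; exact.
have uT i : util J i T = util I i (pre T).
  rewrite utilJ.
  have -> : T :&: (if p \in appr I i then P' else set0) = set0.
    by case: ifP => _; rewrite ?TP0 ?setI0.
  rewrite cost0 addn0 /util; congr cost_set.
  by apply/setP => x; rewrite !inE; case: (x == p).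
have mS' : mpb J S'.
  split => // T2 fT2 k hk i; rewrite uS.
  apply: (optS (pre T) fpT) => j; rewrite -uT; exact: (optT T2 fT2 k hk j).
case/set0Pn: nP' => q qP; exists q; split => //; exists S'; split => //.
by rewrite inE qP orbT.
Qed.
End Split.

Section Merge.
Variables (n : nat) (P Q : finType) (I : instance n P) (P' : {set P})
  (J : instance n Q) (emb : P -> Q) (p : Q).
Hypothesis H : is_merge I P' J emb p.

Lemma minj x y : x \notin P' -> y \notin P' -> emb x = emb y -> x = y.
Proof. by move: H => [h1 [h2 [h3 [h4 [h5 [h6 h7]]]]]]; apply: h1. Qed.
Lemma mne x : x \notin P' -> emb x != p.
Proof. by move: H => [h1 [h2 [h3 [h4 [h5 [h6 h7]]]]]]; apply: h2. Qed.
Lemma msurj q : q != p -> exists x, x \notin P' /\ emb x = q.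
Proof. by move: H => [h1 [h2 [h3 [h4 [h5 [h6 h7]]]]]]; apply: h3. Qed.
Lemma mcost x : x \notin P' -> cost J (emb x) = cost I x.
Proof. by move: H => [h1 [h2 [h3 [h4 [h5 [h6 h7]]]]]]; apply: h4. Qed.
Lemma mcostp : cost J p = cost_set I P'.
Proof. by move: H => [h1 [h2 [h3 [h4 [h5 [h6 h7]]]]]]; apply: h5. Qed.
Lemma mbud : budget J = budget I.
Proof. by move: H => [h1 [h2 [h3 [h4 [h5 [h6 h7]]]]]]; apply: h6. Qed.
Lemma mappr i : appr J i =
  emb @: (appr I i :\: P') :|: (if P' \subset appr I i then [set p] else set0).
Proof. by move: H => [h1 [h2 [h3 [h4 [h5 [h6 h7]]]]]]; apply: h7. Qed.

Definition mpre (Y : {set Q}) := [set x | (x \notin P') && (emb x \in Y)].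

Lemma mdecomp Y : cost_set J Y =
  cost_set I (mpre Y) + (if p \in Y then cost_set I P' else 0).
Proof.
rewrite (costID J Y [set p]) addnC; congr (_ + _).
  have -> : Y :\: [set p] = emb @: mpre Y.
    apply/setP => y; rewrite !inE; apply/andP/imsetP.
      move=> [yp yY]; case: (msurj yp) => x [xP ey].
      by exists x; rewrite ?inE ?xP ?ey ?yY.
    move=> [x]; rewrite inE => /andP[xP xY] ->; split=> //; exact: mne.
  rewrite /cost_set big_imset.
    by apply: eq_bigr => x; rewrite inE => /andP[xP _]; rewrite mcost.
  move=> x y; rewrite !inE => /andP[xP _] /andP[yP _]; exact: minj.
case: ifP => pY.
  have -> : Y :&: [set p] = [set p] by apply/setIidPr; rewrite sub1set.
  by rewrite /cost_set big_set1 mcostp.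
have -> : Y :&: [set p] = set0.
  by apply/setP => y; rewrite !inE; case: eqP => [->|]; rewrite ?pY ?andbF.
exact: cost0.
Qed.

Lemma mpreI Y Z : mpre (Y :&: Z) = mpre Y :&: mpre Z.
Proof. by apply/setP => x; rewrite !inE; case: (x \in P'). Qed.

Lemma mpreE (X : {set P}) (C : {set Q}) : [disjoint X & P'] -> C \subset [set p] ->
  mpre (emb @: X :|: C) = X.
Proof.
move=> dX Cp; apply/setP => x; rewrite !inE.
case: (boolP (x \in P')) => [xP | xP] /=.
  by apply/esym/negP => xX; move/disjointFr: dX => /(_ x xX); rewrite xP.
have -> : (emb x \in C) = false.
  by apply/negP => /(subsetP Cp); rewrite inE; apply/negP; exact: mne.
rewrite orbF; apply/imsetP/idP => [[y yX e]|]; last by exists x.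
rewrite (minj xP _ e) //; apply/negP => yP.
by move/disjointFr: dX => /(_ y yX); rewrite yP.
Qed.

Lemma mpE (X : {set P}) (C : {set Q}) : [disjoint X & P'] ->
  (p \in emb @: X :|: C) = (p \in C).
Proof.
move=> dX; rewrite inE; case: (boolP (p \in C)) => _; rewrite ?orbT ?orbF //.
apply/negP => /imsetP[x xX e]; have xP : x \notin P'.
  by apply/negP => xP; move/disjointFr: dX => /(_ x xX); rewrite xP.
by move: (mne xP); rewrite -e eqxx.
Qed.

Lemma dD (X : {set P}) : [disjoint X :\: P' & P'].
Proof. by rewrite disjoint_sym disjoints_subset setCD subsetUr. Qed.

Lemma mutilJ i Y : util J i Y = cost_set I (mpre Y :&: (appr I i :\: P')) +
  (if (p \in Y) && (P' \subset appr I i) then cost_set I P' else 0).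
Proof.
have hC : (if P' \subset appr I i then [set p] else set0) \subset [set p].
  by case: ifP => _; rewrite ?sub0set.
rewrite /util mdecomp mpreI mappr mpreE ?dD //; congr (_ + _).
rewrite in_setI mpE ?dD //; case: (P' \subset _); case: (p \in Y); rewrite ?inE ?eqxx //.
Qed.


Lemma merge_ok S : mpb I S -> P' \subset S ->
  (forall i, appr I i :&: P' = P' \/ appr I i :&: P' = set0) -> winning J p.
Proof.
move=> [fS optS] sP hyp.
have capP i : cost_set I (appr I i :&: P') =
    if P' \subset appr I i then cost_set I P' else 0.
  case: (hyp i) => e.
    have s : P' \subset appr I i by apply/setIidPr.
    by rewrite e s.
  rewrite e cost0; case: ifP => // s; move: e; rewrite (setIidPr s) => ->.
  by rewrite cost0.
set S'' := emb @: (S :\: P') :|: [set p].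
have preS : mpre S'' = S :\: P' := mpreE (dD S) (subxx _).
have pS : p \in S'' by rewrite !inE eqxx orbT.
have cS : cost_set I S = cost_set I P' + cost_set I (S :\: P').
  by rewrite (costID I S P') (setIidPr sP).
have uS i : util J i S'' = util I i S.
  rewrite mutilJ preS pS /= /util (costID I (S :&: appr I i) P') (addnC (cost_set I (S :&: appr I i :&: P'))).
  congr (_ + _).
    by congr cost_set; apply/setP => x; rewrite !inE; case: (x \in P').
  rewrite -capP; congr cost_set; apply/setP => x; rewrite !inE.
  case: (boolP (x \in P')) => xP; [rewrite (subsetP sP x xP) | ];
    by rewrite ?andbT ?andbF.
have fS'' : feasible J S''.
  by rewrite /feasible mdecomp preS pS mbud addnC -cS.
exists S''; split => //; split => // T fT k hk i; rewrite uS.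
have dT : [disjoint mpre T & P'].
  rewrite -setI_eq0; apply/eqP/setP => x; rewrite !inE.
  by case: (x \in P'); rewrite ?andbF.
set T' := mpre T :|: (if p \in T then P' else set0).
have cT : cost_set I T' = cost_set J T.
  rewrite mdecomp /T'; case: ifP => pT; first by rewrite costU.
  by rewrite setU0 addn0.
have fT' : feasible I T' by rewrite /feasible cT -mbud; exact: fT.
have uT j : util I j T' = util J j T.
  rewrite mutilJ /util (costID I (T' :&: appr I j) P') addnC /T'.
  case: (boolP (p \in T)) => pT /=.
    congr (_ + _).
      by congr cost_set; apply/setP => x; rewrite !inE; case: (x \in P');
        rewrite ?andbF ?andbT ?orbF.
    rewrite -capP; congr cost_set; apply/setP => x; rewrite !inE.
    by case: (x \in P'); rewrite ?andbF ?andbT ?orbT.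
  rewrite setU0 addn0.
  have -> : mpre T :&: appr I j :&: P' = set0.
    by apply/setP => x; rewrite !inE; case: (x \in P'); rewrite ?andbF.
  rewrite cost0 ?add0n ?addn0; congr cost_set; apply/setP => x; rewrite !inE.
  by case: (x \in P'); rewrite ?andbF.
apply: (optS T' fT') => j; rewrite uT; exact: hk.
Qed.
End Merge.

Lemma exh (n : nat) (P : finType) (I : instance n P) (S : {set P}) (p : P) :
  mpb I S -> p \notin S -> cost_set I S + cost I p <= budget I ->
  mpb I (p |: S).
Proof.
move=> [fS optS] pS hb; split.
  by rewrite /feasible /cost_set big_setU1 //= addnC.
move=> T fT k hk i; apply: leq_trans (optS T fT k hk i) _.
by apply: cost_sub; apply: setSI; apply: subsetUr.
Qed.

Theorem theorem6 :
  (* (a) splitting monotonicity *)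
  (forall (n : nat) (P Q : finType) (I : instance n P) (p : P)
          (J : instance n Q) (emb : P -> Q) (P' : {set Q}),
      winning I p -> P' != set0 -> is_split I p J emb P' ->
      exists q, q \in P' /\ winning J q) /\
  (* (b) merging monotonicity *)
  (forall (n : nat) (P Q : finType) (I : instance n P) (S P' : {set P})
          (J : instance n Q) (emb : P -> Q) (p : Q),
      mpb I S -> P' \subset S ->
      (forall i, appr I i :&: P' = P' \/ appr I i :&: P' = set0) ->
      is_merge I P' J emb p ->
      winning J p) /\
  (* (c) weak exhaustiveness *)
  (forall (n : nat) (P : finType) (I : instance n P) (S : {set P}) (p : P),
      mpb I S -> p \notin S -> cost_set I S + cost I p <= budget I ->
      mpb I (p |: S)).
Proof.
split; first by move=> n P Q I p J emb P' w ne H; exact: (split_ok H w ne).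
split; first by move=> n P Q I S P' J emb p m s h H; exact: (merge_ok H m s h).
exact: exh.
Qed.
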